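(* Let $X$ be a compact metric space, let $f:X\to X$ be continuous and let $x\in X$. If $\omega_f(x)$ is totally periodic, then $\omega_f(x)$ has finitely many connected components, and these components form a periodic cycle: they can be listed as $C_0,\dots,C_{k-1}$ with $f(C_0)=C_1, f(C_1)=C_2,\dots,f(C_{k-2})=C_{k-1}, f(C_{k-1})=C_0$.
   Context: For $x\in X$, the $\omega$-limit set is $\omega_f(x)=\{y\in X:\ \exists\, n_i\in\mathbb{N},\ n_i\to+\infty,\ \lim_{i\to\infty} d(f^{n_i}(x),y)=0\}$. A point $y$ is periodic if $f^n(y)=y$ for some $n\ge1$; $P(f)$ denotes the set of periodic points. The set $\omega_f(x)$ is called totally periodic if $\omega_f(x)\subset P(f)$. *)

(* Defs.v *)
From HB Require Import structures.
From mathcomp Require Import all_boot all_order all_algebra.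
From mathcomp Require Import all_classical all_reals all_analysis.
Set Implicit Arguments. Unset Strict Implicit. Unset Printing Implicit Defensive.
Import Order.TTheory GRing.Theory Num.Theory.
Local Open Scope classical_set_scope.

Definition omega_limit {T : topologicalType} (f : T -> T) (x : T) : set T :=
  [set y | exists u : nat -> nat,
      (u @ \oo --> \oo) /\ ((fun i => iter (u i) f x) @ \oo --> y)].

Definition periodic_point {T : Type} (f : T -> T) (y : T) : Prop :=
  exists n : nat, (1 <= n)%N /\ iter n f y = y.

Definition periodic_points {T : Type} (f : T -> T) : set T :=
  [set y | periodic_point f y].

Definition totally_periodic {T : topologicalType} (f : T -> T) (x : T) : Prop :=
  omega_limit f x `<=` periodic_points f.

Definition components {T : topologicalType} (A : set T) : set (set T) :=
  [set connected_component A y | y in A].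

(* Main.v *)
Require Import Defs.
From HB Require Import structures.
From mathcomp Require Import all_boot all_order all_algebra.
From mathcomp Require Import all_classical all_reals all_analysis.
Import Order.TTheory GRing.Theory Num.Theory.
Local Open Scope classical_set_scope.

Section Omega.
Variables (R : realType) (X : metricType R) (f : X -> X) (x : X).
Hypotheses (cX : compact [set: X]) (cf : continuous f).

Local Notation Y := (omega_limit f x).
Local Notation orb m := (iter m f x).

Definition clust (y : X) := forall U, nbhs y U -> forall N, exists2 m, (N <= m)%N & U (orb m).

Lemma iter_cont n : continuous (iter n f).
Proof.
elim: n => [|n IH] z /=; first exact: cvg_id.
exact: (continuous_comp (IH z) (cf _)).
Qed.

Lemma omegaE y : Y y <-> clust y.
Proof.
split.
  move=> [u [uoo uy]] U yU N.
  have h1 : \forall i \near \oo, (N <= u i)%N by move/cvgnyPge: uoo; apply.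
  have h2 : \forall i \near \oo, U (orb (u i)) by exact: uy.
  have [i [Ni Ui]] := filter_ex (filterI h1 h2).
  by exists (u i).
move=> cy.
have H : forall (N : nat) (i : nat), exists m : nat,
    (N <= m)%N /\ ball y (i.+1%:R^-1) (orb m).
  move=> N i; have [m Nm bm] := cy _ (nbhsx_ballx y (i.+1%:R^-1 : R) ltac:(by [])) N.
  by exists m.
pose H' N := choice (H N).
pose g N := projT1 (H' N).
have hg : forall N i, (N <= g N i)%N /\ ball y (i.+1%:R^-1) (orb (g N i)) := fun N => projT2 (H' N).
pose u := fix u i := match i with 0 => g 0%N 0%N | i'.+1 => g (u i').+1 i'.+1 end.
have ui : forall i, (i <= u i)%N.
  elim=> [|i IH] //=; by have [+ _] := hg (u i).+1 i.+1; apply: leq_trans.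
exists u; split.
  apply/cvgnyPge => A; near=> i; apply: leq_trans (ui i).
  by near: i; exists A.
apply/cvg_ballP => e e0.
have := near_infty_natSinv_lt (PosNum e0).
apply: filterS => i /= ie.
apply: (le_ball (ltW ie)).
by case: i ie => [|i] ie /=; [have [_ ] := hg 0%N 0%N|have [_ ] := hg (u i).+1 i.+1].
Unshelve. all: by end_near.
Qed.


Lemma sep_closed (A B : set X) : closed A -> closed B -> A `&` B = set0 ->
  exists U V, [/\ open U, open V, A `<=` U, B `<=` V & U `&` V = set0].
Proof. exact: ((@normal_openP R X).1 (@pseudometric_normal R X)). Qed.

Lemma CL (P : nat -> Prop) : (forall N, exists2 m, (N <= m)%N & P m) ->
  exists p : X, forall U, nbhs p U -> forall N, exists2 m, (N <= m)%N & P m /\ U (orb m).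
Proof.
move=> hP.
pose B N := [set z | exists2 m, (N <= m)%N /\ P m & z = orb m].
have FF : Filter (filter_from setT B).
  apply: filter_fromT_filter; first by exists 0%N.
  move=> i j; exists (maxn i j) => z [m [ijm Pm] ->]; split.
    by exists m => //; split => //; apply: leq_trans ijm; apply: leq_maxl.
  by exists m => //; split => //; apply: leq_trans ijm; apply: leq_maxr.
have PF : ProperFilter (filter_from setT B).
  apply: filter_from_proper => N _; have [m Nm Pm] := hP N.
  by exists (orb m); exists m.
have [p [_ cp]] := cX (filter_from setT B) PF filterT.
exists p => U pU N.
have [z [[m [Nm Pm] ->] Um]] := cp (B N) U (ex_intro2 _ _ N I (fun z h => h)) pU.
by exists m.
Qed.

Lemma Y_closed : closed Y.
Proof.
move=> p cp; apply/omegaE => U pU N.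
move: pU; rewrite nbhsE => -[V [oV Vp] VU].
have [z [Yz Vz]] := cp V (open_nbhs_nbhs (conj oV Vp)).
have [m Nm Vm] := (omegaE z).1 Yz V (open_nbhs_nbhs (conj oV Vz)) N.
by exists m => //; apply: VU.
Qed.

Lemma Y_nonempty : Y !=set0.
Proof.
have [p hp] := CL (fun _ => True) (fun N => ex_intro2 _ _ N (leqnn N) I).
exists p; apply/omegaE => U pU N.
by have [m Nm [_ Um]] := hp U pU N; exists m.
Qed.

Lemma f_Y y : Y y -> Y (f y).
Proof.
move=> /omegaE cy; apply/omegaE => U fyU N.
have hU : nbhs y (f @^-1` U) by exact: cf fyU.
have [m Nm Um] := cy _ hU N.
by exists m.+1 => //; apply: leq_trans Nm _.
Qed.

Lemma iter_Y n y : Y y -> Y (iter n f y).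
Proof. by elim: n => [|n IH] //= Yy; apply: f_Y; apply: IH. Qed.

Lemma Ev (U : set X) : open U -> Y `<=` U -> exists N, forall m, (N <= m)%N -> U (orb m).
Proof.
move=> oU YU; case: (pselect (exists N, forall m, (N <= m)%N -> U (orb m))) => // hN.
have H : forall N, exists2 m, (N <= m)%N & ~ U (orb m).
  move=> N; apply: contrapT => hh; apply: hN; exists N => m Nm.
  by apply: contrapT => nU; apply: hh; exists m.
have [p hp] := CL _ H.
have Yp : Y p.
  by apply/omegaE => V pV N; have [m Nm [_ Vm]] := hp V pV N; exists m.
have [m _ [nU Um]] := hp U (open_nbhs_nbhs (conj oU (YU _ Yp))) 0%N.
by [].
Qed.

Lemma WI (A : set X) : A `<=` Y -> closed A -> closed (Y `\` A) ->
  (forall a, A a -> A (f a)) -> A !=set0 -> (Y `\` A) !=set0 -> False.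
Proof.
move=> AY cA cB fA [a Aa] [b Bb].
have AB0 : A `&` (Y `\` A) = set0 by apply/seteqP; split => z // [? []].
have [UA [UB [oUA oUB AUA BUB UAB]]] := sep_closed _ _ cA cB AB0.
pose U := UA `&` f @^-1` UA.
have oU : open U by apply: openI => //; apply: open_comp => // z _; apply: cf.
have AU : A `<=` U by move=> z Az; split; [apply: AUA|apply: AUA; apply: fA].
have [N hN] : exists N, forall m, (N <= m)%N -> (U `|` UB) (orb m).
  apply: Ev; first exact: openU.
  move=> z Yz; case: (pselect (A z)) => Az; [left; exact: AU|right; exact: BUB].
have [m0 Nm0 Um0] := (omegaE a).1 (AY _ Aa) U (open_nbhs_nbhs (conj oU (AU _ Aa))) N.
have stay : forall k, U (orb (k + m0)).
  elim=> [//|k IH].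
  have : (U `|` UB) (orb (k.+1 + m0)) by apply: hN; apply: leq_trans Nm0 _; apply: leq_addl.
  case=> // UBk; exfalso.
  have UAk : UA (orb (k.+1 + m0)) by have [_] := IH.
  by have : (UA `&` UB) (orb (k.+1 + m0)) by [] ; rewrite UAB.
have [m1 m01 UBm1] := (omegaE b).1 (Bb.1) UB (open_nbhs_nbhs (conj oUB (BUB _ Bb))) m0.
have := stay (m1 - m0)%N; rewrite subnK // => -[UAm1 _].
by have : (UA `&` UB) (orb m1) by []; rewrite UAB.
Qed.


Definition clY (E : set X) := [/\ E `<=` Y, closed E & closed (Y `\` E)].
Local Notation comp := (connected_component Y).

Lemma clY_Y : clY Y.
Proof. by split => //; [exact: Y_closed|rewrite setDv; exact: closed0]. Qed.

Lemma clY_I E1 E2 : clY E1 -> clY E2 -> clY (E1 `&` E2).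
Proof.
move=> [s1 c1 d1] [s2 c2 d2]; split; first by move=> z [/s1].
  exact: closedI.
by rewrite setDIr; apply: closedU.
Qed.

Lemma clY_U E1 E2 : clY E1 -> clY E2 -> clY (E1 `|` E2).
Proof.
move=> [s1 c1 d1] [s2 c2 d2]; split; first by move=> z [/s1|/s2].
  exact: closedU.
by rewrite setDUr; apply: closedI.
Qed.

Lemma clY_pre n E : clY E -> clY (Y `&` (iter n f) @^-1` E).
Proof.
move=> [sE cE dE]; split; first by move=> z [].
  apply: closedI; first exact: Y_closed.
  by apply: preimage_closed => // z _; apply: iter_cont.
have -> : Y `\` (Y `&` iter n f @^-1` E) = Y `&` iter n f @^-1` (Y `\` E).
  apply/seteqP; split => z /=.
    by move=> [Yz nE]; split => //; split; [exact: iter_Y|move=> Ez; apply: nE].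
  by move=> [Yz [_ nE]]; split => // -[].
apply: closedI; first exact: Y_closed.
by apply: preimage_closed => // z _; apply: iter_cont.
Qed.

Lemma comp_Y z w : comp z w -> Y z /\ Y w.
Proof. by move=> [C [Cz CY _] Cw]; split; apply: CY. Qed.

Lemma comp_clY E z : clY E -> E z -> comp z `<=` E.
Proof.
move=> [sE cE dE] Ez.
have Yz := sE _ Ez.
have h : comp z `&` E = comp z.
  apply: (@component_connected _ Y z).
- by exists z; split => //; apply: connected_component_refl.
- exists (~` (Y `\` E)); first by rewrite openC.
  apply/seteqP; split => w /=; first by move=> [Cw Ew]; split => // -[].
  move=> [Cw nE]; split => //; apply: contrapT => nEw; apply: nE; split => //.
  exact: connected_component_sub Cw.
- by exists E.
move=> w Cw; have : (comp z `&` E) w by rewrite h.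
by case.
Qed.

Lemma comp_map n z w : comp z w -> comp (iter n f z) (iter n f w).
Proof.
move=> czw; have [Yz _] := comp_Y _ _ czw.
have sub : (iter n f) @` comp z `<=` comp (iter n f z).
  apply: connected_component_max.
  - by exists z => //; apply: connected_component_refl.
  - move=> _ [v cv <-]; apply: iter_Y; exact: (comp_Y _ _ cv).2.
  - apply: connected_continuous_connected; first exact: component_connected.
    by apply: continuous_subspaceT; apply: iter_cont.
by apply: sub; exists w.
Qed.


Definition Qset y := \bigcap_(E in [set E | clY E /\ E y]) E.

Lemma Qset_y y : Qset y y.
Proof. by move=> E [_ Ey]. Qed.

Lemma Qset_Y y : Y y -> Qset y `<=` Y.
Proof. by move=> Yy z Qz; apply: (Qz Y); split => //; exact: clY_Y. Qed.

Lemma Qset_closed y : closed (Qset y).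
Proof. by apply: closed_bigI => E [[]]. Qed.

Lemma ne_set0 (A : set X) : ~ (A !=set0) -> A = set0.
Proof. by move=> h; apply/seteqP; split => z // Az; apply: h; exists z. Qed.

Lemma CPT y K : Y y -> closed K -> K `&` Qset y = set0 ->
  exists E, [/\ clY E, E y & E `&` K = set0].
Proof.
move=> Yy cK KQ; apply: contrapT => hn.
have ne : forall E, clY E /\ E y -> (E `&` K) !=set0.
  move=> E [cE Ey]; apply: contrapT => h; apply: hn; exists E; split => //.
  exact: ne_set0.
pose D := [set E | clY E /\ E y].
have FF : Filter (filter_from D (fun E => E `&` K)).
  apply: filter_from_filter; first by exists Y; split => //; exact: clY_Y.
  move=> i j [ci yi] [cj yj]; exists (i `&` j); first by split; [exact: clY_I|].
  by move=> z [[iz jz] Kz].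
have PF : ProperFilter (filter_from D (fun E => E `&` K)).
  by apply: filter_from_proper => E DE; apply: ne.
have [p [_ cp]] := cX (filter_from D (fun E => E `&` K)) PF filterT.
have inE : forall E, D E -> (E `&` K) p.
  move=> E [[sE cE dE] Ey]; apply: (closedI cE cK) => B pB.
  by apply: cp pB; exists E.
have : (K `&` Qset y) p.
  split; first by have [] := inE Y (conj clY_Y Yy).
  by move=> E DE; have [] := inE E DE.
by rewrite KQ.
Qed.

Lemma clY_split E U V : clY E -> open U -> open V -> E `<=` U `|` V -> U `&` V = set0 ->
  clY (E `&` ~` V).
Proof.
move=> [sE cE dE] oU oV EUV UV; split; first by move=> z [/sE].
  by apply: closedI => //; exact: open_closedC.
have -> : Y `\` (E `&` ~` V) = (Y `\` E) `|` (E `&` ~` U).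
  apply/seteqP; split => z /=.
    move=> [Yz nEV]; case: (pselect (E z)) => Ez; last by left.
    right; split => // Uz; apply: nEV; split => // Vz.
    by have : (U `&` V) z by []; rewrite UV.
  case=> [[Yz nE]|[Ez nU]]; first by split => // -[].
  split; first exact: sE.
  by move=> [_ nV]; have [] := EUV _ Ez.
by apply: closedU => //; apply: closedI => //; exact: open_closedC.
Qed.

Lemma Q_conn y : Y y -> connected (Qset y).
Proof.
move=> Yy B [b Bb] [Op oO BO] [Fc cF BF].
pose A1 := Qset y `&` Fc; pose A2 := Qset y `&` ~` Op.
have cA1 : closed A1 by apply: closedI => //; exact: Qset_closed.
have cA2 : closed A2 by apply: closedI; [exact: Qset_closed|exact: open_closedC].
have A12 : A1 `&` A2 = set0.
  apply/seteqP; split => z // [[Qz Fz] [_ nO]].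
  have : B z by rewrite BF.
  by rewrite BO => -[].
have [U1 [U2 [oU1 oU2 AU1 AU2 U12]]] := sep_closed _ _ cA1 cA2 A12.
have QU : Qset y `<=` U1 `|` U2.
  move=> z Qz; case: (pselect (Op z)) => Oz.
    left; apply: AU1; have : B z by rewrite BO; split.
    by rewrite BF.
  by right; apply: AU2.
have cK : closed (~` (U1 `|` U2)) by apply: open_closedC; exact: openU.
have KQ : ~` (U1 `|` U2) `&` Qset y = set0.
  by apply/seteqP; split => z // [nU /QU].
have [E [clE Ey EK]] := CPT _ _ Yy cK KQ.
have EU : E `<=` U1 `|` U2.
  move=> z Ez; apply: contrapT => nU.
  by have : (E `&` ~` (U1 `|` U2)) z by []; rewrite EK.
case: (pselect (U2 y)) => U2y.
  have clE2 : clY (E `&` ~` U1).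
    have EU' : E `<=` U2 `|` U1 by move=> z /EU [] ?; [right|left].
    have U21 : U2 `&` U1 = set0 by rewrite setIC.
    exact: (clY_split E U2 U1 clE oU2 oU1 EU' U21).
  have E2y : (E `&` ~` U1) y.
    by split => // U1y; have : (U1 `&` U2) y by []; rewrite U12.
  have Bb' := Bb; rewrite BF in Bb'.
  have U1b := AU1 _ Bb'.
  by have [_ ] := (Bb'.1 _ (conj clE2 E2y)).
have clE1 : clY (E `&` ~` U2) by exact: (clY_split E U1 U2 clE oU1 oU2 EU U12).
have E1y : (E `&` ~` U2) y by [].
apply/seteqP; split; first by rewrite BO => z [].
move=> z Qz; rewrite BO; split => //.
apply: contrapT => nO.
have [_ nU2] := Qz _ (conj clE1 E1y).
by apply: nU2; apply: AU2.
Qed.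

Lemma SEP y D : Y y -> closed D -> (forall z, D z -> ~ comp y z) ->
  exists E, [/\ clY E, E y & E `&` D = set0].
Proof.
move=> Yy cD hD; apply: CPT => //.
apply/seteqP; split => z // [Dz Qz]; apply: (hD _ Dz).
apply: (connected_component_max (Qset_y y) (Qset_Y _ Yy) (Q_conn _ Yy)) Qz.
Qed.


Hypothesis tp : totally_periodic f x.

Lemma iter_comm m n y : iter m f (iter n f y) = iter n f (iter m f y).
Proof. by rewrite -!iterD addnC. Qed.

Lemma iter_mulper p q y : iter p f y = y -> iter (p * q) f y = y.
Proof.
move=> hp; elim: q => [|q IH]; first by rewrite muln0.
by rewrite mulnS iterD IH hp.
Qed.

Lemma back z j : Y z -> exists t, iter t f (iter j f z) = z.
Proof.
move=> Yz; have [p [p1 hp]] := tp _ Yz.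
exists (p.-1 * j)%N; rewrite -iterD.
have -> : (p.-1 * j + j = p * j)%N.
  by case: p p1 hp => // p _ _; rewrite mulSn addnC.
by apply: iter_mulper.
Qed.

Definition Qn n := [set y | Y y /\ comp y (iter n f y)].

Lemma closed_set1X (p : X) : closed [set p].
Proof. exact: (accessible_closed_set1 (hausdorff_accessible (@metric_hausdorff R X))). Qed.

Lemma Qn_closed n : closed (Qn n).
Proof.
move=> p cp.
have Yp : Y p by apply: Y_closed; apply: (closureS _ cp) => z [].
split => //; apply: contrapT => ncomp.
have [E [[sE cE dE] Ep ED]] := SEP p [set iter n f p] Yp (closed_set1X _)
  (fun z zp => ltac:(rewrite zp; exact: ncomp)).
pose O := ~` (Y `\` E) `&` (iter n f) @^-1` (~` E).
have oO : open O.
  apply: openI; first exact: closed_openC.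
  by apply: open_comp; [move=> z _; apply: iter_cont|exact: closed_openC].
have Op : O p.
  split; first by move=> [].
  by move=> Egp; have : (E `&` [set iter n f p]) (iter n f p) by []; rewrite ED.
have [z [[Yz cz] [nYE nEg]]] := cp O (open_nbhs_nbhs (conj oO Op)).
have Ez : E z by apply: contrapT => nEz; apply: nYE.
by apply: nEg; apply: (comp_clY E z (And3 sE cE dE) Ez).
Qed.

Lemma Baire : exists n, (0 < n)%N /\ exists E, [/\ clY E, E !=set0 & E `<=` Qn n].
Proof.
apply: contrapT => hB.
have step : forall n E, exists E', (0 < n)%N -> clY E -> E !=set0 ->
    [/\ clY E', E' !=set0, E' `<=` E & E' `&` Qn n = set0].
  move=> n E.
  case: (pselect ((0 < n)%N /\ clY E /\ E !=set0)) => [[n0 [clE neE]]|h]; last first.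
    by exists E => n0 clE neE; exfalso; apply: h.
  have nsub : ~ (E `<=` Qn n) by move=> EQ; apply: hB; exists n; split => //; exists E.
  have [z [Ez nQz]] : exists z, E z /\ ~ Qn n z.
    apply: contrapT => hz; apply: nsub => z Ez; apply: contrapT => nQ; apply: hz.
    by exists z.
  have Yz : Y z by case: clE => + _ _; apply.
  have [E'' [clE'' E''z E''Q]] : exists E'', [/\ clY E'', E'' z & E'' `&` Qn n = set0].
    apply: SEP => //; first exact: Qn_closed.
    move=> w [Yw cw] czw; apply: nQz; split => //.
    apply: (connected_component_trans czw).
    apply: (connected_component_trans cw).
    by apply: comp_map; apply: connected_component_sym.
  exists (E `&` E'') => _ _ _; split.
  - exact: clY_I.
  - by exists z.
  - by move=> w [].
  - by apply/seteqP; split => w // [[_ E''w] Qw]; have : (E'' `&` Qn n) w by []; rewrite E''Q.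
pose s n := projT1 (choice (step n)).
have hs : forall n E, (0 < n)%N -> clY E -> E !=set0 ->
    [/\ clY (s n E), s n E !=set0, s n E `<=` E & s n E `&` Qn n = set0].
  by move=> n; exact: (projT2 (choice (step n))).
pose sq := fix sq k := match k with 0 => Y | k'.+1 => s k'.+1 (sq k') end.
have hsq : forall k, clY (sq k) /\ sq k !=set0.
  elim=> [|k [c1 c2]]; first by split; [exact: clY_Y|exact: Y_nonempty].
  by have [? ? _ _] := hs k.+1 (sq k) isT c1 c2.
have dec : forall k, sq k.+1 `<=` sq k.
  by move=> k; have [c1 c2] := hsq k; have [_ _ ? _] := hs k.+1 (sq k) isT c1 c2.
have mono : forall d i, sq (d + i)%N `<=` sq i.
  elim=> [|d IH] i; first by []. 
  apply: subset_trans (IH i); exact: (dec (d + i)%N).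
have avoid : forall k, sq k.+1 `&` Qn k.+1 = set0.
  by move=> k; have [c1 c2] := hsq k; have [_ _ _ ?] := hs k.+1 (sq k) isT c1 c2.
have FF : Filter (filter_from setT sq).
  apply: filter_fromT_filter; first by exists 0%N.
  move=> i j; exists (maxn i j) => z sz; split.
    by apply: (mono (maxn i j - i)%N); rewrite subnK // leq_maxl.
  by apply: (mono (maxn i j - j)%N); rewrite subnK // leq_maxr.
have PF : ProperFilter (filter_from setT sq).
  by apply: filter_from_proper => k _; have [] := hsq k.
have [p [_ cp]] := cX (filter_from setT sq) PF filterT.
have inK : forall k, sq k p.
  move=> k; have [[_ ck _] _] := hsq k; apply: ck => B pB.
  by apply: cp pB; exists k.
have Yp : Y p := inK 0%N.
have [n [n1 hn]] := tp _ Yp.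
have Qp : Qn n p by split => //; rewrite hn; apply: connected_component_refl.
case: n n1 hn Qp => // n _ _ Qp.
have : (sq n.+1 `&` Qn n.+1) p by split => //; apply: inK.
by rewrite avoid.
Qed.


Definition Oset E n := [set z | Y z /\ exists2 j, (j < n)%N & E (iter j f z)].

Lemma Oset_clY E n : clY E -> clY (Oset E n).
Proof.
move=> clE; elim: n => [|n IH].
  have -> : Oset E 0 = set0 by apply/seteqP; split => z // [_ []].
  split => //; first exact: closed0.
  by rewrite setD0; exact: Y_closed.
have -> : Oset E n.+1 = Oset E n `|` (Y `&` iter n f @^-1` E).
  apply/seteqP; split => z /=.
    move=> [Yz [j]]; rewrite ltnS leq_eqVlt => /orP[/eqP ->|jn] Ej; first by right.
    by left; split => //; exists j.
  case=> [[Yz [j jn Ej]]|[Yz Ez]]; split => //; first by exists j => //; apply: ltnW.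
  by exists n.
by apply: clY_U => //; apply: clY_pre.
Qed.

Lemma Oset_inv E n : (0 < n)%N -> clY E -> (forall w, E w -> comp w (iter n f w)) ->
  forall z, Oset E n z -> Oset E n (f z).
Proof.
move=> n0 clE hE z [Yz [j jn Ej]]; split; first exact: f_Y.
case: j jn Ej => [|j] jn Ej.
  exists n.-1; first by rewrite prednK.
  rewrite -iterSr prednK //.
  exact: (comp_clY E z clE Ej _ (hE z Ej)).
by exists j; [apply: ltnW|rewrite -iterSr].
Qed.

Lemma Oset_all E n : (0 < n)%N -> clY E -> E !=set0 ->
  (forall w, E w -> comp w (iter n f w)) -> forall z, Y z -> Oset E n z.
Proof.
move=> n0 clE [e Ee] hE z Yz; apply: contrapT => nO.
have [s c d] := Oset_clY E n clE.
apply: (WI (Oset E n) s c d (Oset_inv E n n0 clE hE)).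
  by exists e; split; [case: clE => + _ _; apply|exists 0%N].
by exists z.
Qed.

Lemma all_Qn : exists n, (0 < n)%N /\ forall z, Y z -> comp z (iter n f z).
Proof.
have [n [n0 [E [clE neE EQ]]]] := Baire.
exists n; split => // z Yz.
have [_ [j jn Ej]] := Oset_all E n n0 clE neE (fun w Ew => (EQ w Ew).2) z Yz.
have [t ht] := back z j Yz.
have := comp_map t _ _ (EQ _ Ej).2.
by rewrite (iter_comm t n) ht.
Qed.

Lemma comp_mult k y : comp y (iter k f y) -> forall q, comp y (iter (q * k) f y).
Proof.
move=> base; elim=> [|q IH].
  by rewrite mul0n /=; apply: connected_component_refl; exact: (comp_Y _ _ base).1.
rewrite mulSn iterD; apply: (connected_component_trans IH).
by rewrite -iter_comm; apply: comp_map.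
Qed.


Lemma cover n y0 : (0 < n)%N -> (forall z, Y z -> comp z (iter n f z)) -> Y y0 ->
  forall z, Y z -> exists2 r, (r < n)%N & comp (iter r f y0) z.
Proof.
move=> n0 hn Yy0 z Yz; apply: contrapT => hz.
pose D := [set iter j f z | j in `I_n].
have cD : closed D.
  apply: ((@accessible_finite_set_closed X).1 (hausdorff_accessible (@metric_hausdorff R X))).
  by apply: finite_image; apply: finite_II.
have hD : forall w, D w -> ~ comp y0 w.
  move=> _ [j jn <-] cj.
  have [t ht] := back z j Yz.
  have := comp_map t _ _ cj; rewrite ht => ct.
  apply: hz; exists (t %% n)%N; first by rewrite ltn_pmod.
  apply: connected_component_trans ct.
  have := comp_mult n (iter (t %% n) f y0) (hn _ (iter_Y _ _ Yy0)) (t %/ n).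
  by rewrite -iterD -divn_eq.
have [E [clE Ey0 ED]] := SEP y0 D Yy0 cD hD.
have [_ [j jn Ej]] := Oset_all E n n0 clE (ex_intro _ y0 Ey0)
  (fun w Ew => hn w (let: And3 s _ _ := clE in s w Ew)) z Yz.
have : (E `&` D) (iter j f z) by split => //; exists j.
by rewrite ED.
Qed.


Lemma main :
  finite_set (components (omega_limit f x)) /\
  exists (k : nat) (C : nat -> set X),
    (0 < k)%N /\
    components (omega_limit f x) = C @` `I_k /\
    {in `I_k &, injective C} /\
    (forall i, (i < k)%N -> f @` C i = C ((i.+1) %% k)%N).
Proof.
have [n [n0 hn]] := all_Qn.
have [y0 Yy0] := Y_nonempty.
pose P k := (0 < k)%N && `[< comp y0 (iter k f y0) >].
have exP : exists k, P k by exists n; rewrite /P n0 /=; apply/asboolP; exact: hn.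
case: (ex_minnP exP) => k /andP[k0 /asboolP ck] kmin.
pose C i := comp (iter i f y0).
have modl : forall r, comp (iter (r %% k) f y0) (iter r f y0).
  move=> r.
  have base : comp (iter (r %% k) f y0) (iter k f (iter (r %% k) f y0)).
    by rewrite iter_comm; apply: comp_map.
  have := comp_mult k _ base (r %/ k).
  by rewrite -iterD -divn_eq.
have CE : components (omega_limit f x) = C @` `I_k.
  apply/seteqP; split.
    move=> _ [y Yy <-].
    have [r rn cr] := cover n y0 n0 hn Yy0 y Yy.
    exists (r %% k)%N; first by rewrite /= ltn_pmod.
    rewrite /C (same_connected_component (modl r)).
    by rewrite (same_connected_component cr).
  move=> _ [i ik <-]; exists (iter i f y0) => //; exact: iter_Y.
have noclose : forall i j, (i < j)%N -> (j < k)%N -> C i = C j -> False.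
  move=> i j ij jk Cij.
  have cij : comp (iter i f y0) (iter j f y0).
    rewrite -/(C i) Cij; apply: connected_component_refl; exact: iter_Y.
  have [t ht] := back y0 i Yy0.
  have := comp_map t _ _ cij.
  rewrite ht -(subnK (ltnW ij)) iterD iter_comm ht => cji.
  have : P (j - i)%N by rewrite /P subn_gt0 ij /=; apply/asboolP.
  move/kmin; rewrite leqNgt => /negP; apply.
  by apply: leq_ltn_trans jk; apply: leq_subr.
split; first by rewrite CE; apply: finite_image; apply: finite_II.
exists k, C; split => //; split => //; split.
  move=> i j /set_mem ik /set_mem jk Cij.
  case: (ltngtP i j) => // ij; exfalso.
    exact: (noclose i j ij jk Cij).
  exact: (noclose j i ij ik (esym Cij)).
move=> i ik; apply/seteqP; split.
  move=> _ [w Ciw <-].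
  apply: connected_component_trans (modl i.+1) _.
  exact: (comp_map 1 _ _ Ciw).
move=> w Cw.
have ciw : comp (iter i.+1 f y0) w.
  apply: connected_component_trans Cw.
  by apply: connected_component_sym; apply: modl.
have Yw := (comp_Y _ _ ciw).2.
have [p [p1 hp]] := tp _ Yw.
have pk0 : (0 < p * k)%N by rewrite muln_gt0 p1 k0.
exists (iter (p * k).-1 f w).
  have := comp_map (p * k).-1 _ _ ciw.
  rewrite -iterD => c2.
  have e : ((p * k).-1 + i.+1 = p * k + i)%N by rewrite addnS -addSn prednK.
  move: c2; rewrite e iterD => c2.
  apply: connected_component_trans c2.
  apply: comp_mult; rewrite iter_comm; exact: comp_map.
by rewrite -iterS prednK // iter_mulper.
Qed.

End Omega.

Theorem theorem1p1 (R : realType) (X : metricType R) (f : X -> X) (x : X) :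
  compact [set: X] -> continuous f ->
  totally_periodic f x ->
  finite_set (components (omega_limit f x)) /\
  exists (k : nat) (C : nat -> set X),
    (0 < k)%N /\
    components (omega_limit f x) = C @` `I_k /\
    {in `I_k &, injective C} /\
    (forall i, (i < k)%N -> f @` C i = C ((i.+1) %% k)%N).
Proof. exact: main. Qed.
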